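(* Let $a,b,c,n,m,p,q,r$ be positive integers with $n>1$ and $r>1$, and let $$M=\begin{pmatrix} 1 & a & b\\ c & n & m\\ p & q & r\end{pmatrix}.$$ If $\mathrm{Cat}(M)\neq\emptyset$, then $n\geq ac+1$, $r\geq bp+1$, $m\geq bc$ and $q\geq ap$.
   Context: For an $n\times n$ matrix $M=(m_{ij})$ with entries in the natural numbers, $\mathrm{Cat}(M)$ denotes the collection of categories $A$ with exactly $n$ distinct objects $x_1,\dots,x_n$ such that $|A(x_i,x_j)|=m_{ij}$ for all $i,j$, where $A(x_i,x_j)$ is the set of morphisms from $x_i$ to $x_j$. *)

(* Defs.v *)
From HB Require Import structures.
From mathcomp Require Import all_boot all_algebra.
Set Implicit Arguments. Unset Strict Implicit. Unset Printing Implicit Defensive.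

Record cat_on (n : nat) := CatOn {
  hom : 'I_n -> 'I_n -> finType;
  idm : forall i, hom i i;
  comp : forall i j k, hom j k -> hom i j -> hom i k;
  comp_id_l : forall i j (f : hom i j), comp (idm j) f = f;
  comp_id_r : forall i j (f : hom i j), comp f (idm i) = f;
  comp_assoc : forall i j k l (h : hom k l) (g : hom j k) (f : hom i j),
      comp h (comp g f) = comp (comp h g) f
}.

Definition in_Cat (n : nat) (M : 'M[nat]_n) (A : cat_on n) : Prop :=
  forall i j : 'I_n, #|hom A i j| = M i j.

Definition Cat_nonempty (n : nat) (M : 'M[nat]_n) : Prop :=
  exists A : cat_on n, in_Cat M A.

Definition mx3 (x00 x01 x02 x10 x11 x12 x20 x21 x22 : nat) : 'M[nat]_3 :=
  \matrix_(i < 3, j < 3)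
    nth 0 (nth [::] [:: [:: x00; x01; x02]; [:: x10; x11; x12]; [:: x20; x21; x22]] i) j.

(* Main.v *)
From Pilot Require Import Defs.
From mathcomp Require Import all_boot all_algebra.
Import Pilot.Defs.

Section Aux.
Variables (N : nat) (A : cat_on N).

Lemma one_eq {x} (u v : hom A x x) : #|hom A x x| = 1 -> u = v.
Proof. move=> H; have /fintype_le1P P : #|hom A x x| <= 1 by rewrite H.
by rewrite (P u) (P v). Qed.

Lemma L2 x y z : #|hom A x x| = 1 -> 0 < #|hom A x y| -> 0 < #|hom A z x| ->
  #|hom A y x| * #|hom A x z| <= #|hom A y z|.
Proof.
move=> H1 /card_gt0P [f0 _] /card_gt0P [k0 _].
rewrite -card_prod.
apply: (@leq_card _ _ (fun p : hom A y x * hom A x z => comp p.2 p.1)).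
move=> [g h] [g' h'] /= E.
have Eh : h = h'.
  have := congr1 (fun t => comp t f0) E => /=.
  rewrite -!comp_assoc (one_eq (comp g f0) (idm A x) H1)
          (one_eq (comp g' f0) (idm A x) H1) !comp_id_r //.
have Eg : g = g'.
  have := congr1 (fun t => comp k0 t) E => /=.
  rewrite !comp_assoc (one_eq (comp k0 h) (idm A x) H1)
          (one_eq (comp k0 h') (idm A x) H1) !comp_id_l //.
by rewrite Eh Eg.
Qed.

Lemma L1 x y : #|hom A x x| = 1 -> 1 < #|hom A y y| ->
  #|hom A x y| * #|hom A y x| + 1 <= #|hom A y y|.
Proof.
move=> H1 H2.
rewrite addn1 -card_prod -card_option.
apply: (@leq_card _ _ (fun o : option (hom A x y * hom A y x) =>
   if o is Some p then comp p.1 p.2 else idm A y)).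
have noiso : forall (f : hom A x y) (g : hom A y x), comp f g <> idm A y.
  move=> f g E; move: H2; rewrite ltnNge => /negP; apply.
  apply/fintype_le1P => u v.
  have Ku : forall w : hom A y y, w = idm A y.
    move=> w.
    have e1 : w = comp (comp f g) (comp w (comp f g)) by rewrite E comp_id_l comp_id_r.
    have e2 : comp (comp f g) (comp w (comp f g)) = comp f (comp (comp (comp g w) f) g)
      by rewrite !comp_assoc.
    by apply: (etrans e1); rewrite e2 (one_eq (comp (comp g w) f) (idm A x) H1) comp_id_l E.
  by rewrite (Ku u) (Ku v).
move=> [[f g]|] [[f' g']|] //= E.
- have Ef : f = f'.
    have := congr1 (fun t => comp t f) E => /=.
    rewrite -!comp_assoc (one_eq (comp g f) (idm A x) H1)
            (one_eq (comp g' f) (idm A x) H1) !comp_id_r //.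
  have Eg : g = g'.
    have := congr1 (fun t => comp g t) E => /=.
    rewrite !comp_assoc (one_eq (comp g f) (idm A x) H1)
            (one_eq (comp g f') (idm A x) H1) !comp_id_l //.
  by rewrite Ef Eg.
- by case: (noiso _ _ E).
- by case: (noiso _ _ (esym E)).
Qed.
End Aux.

Theorem mainTheorem3 (a b c n m p q r : nat) :
  0 < a -> 0 < b -> 0 < c -> 0 < n -> 0 < m -> 0 < p -> 0 < q -> 0 < r ->
  1 < n -> 1 < r ->
  Cat_nonempty (mx3 1 a b c n m p q r) ->
  [/\ a * c + 1 <= n, b * p + 1 <= r, b * c <= m & a * p <= q].
Proof.
move=> ha hb hc _ _ hp _ _ hn hr [A H].
pose o0 := @Ordinal 3 0 isT. pose o1 := @Ordinal 3 1 isT. pose o2 := @Ordinal 3 2 isT.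
have h00 := H o0 o0. have h01 := H o0 o1. have h02 := H o0 o2.
have h10 := H o1 o0. have h11 := H o1 o1. have h12 := H o1 o2.
have h20 := H o2 o0. have h21 := H o2 o1. have h22 := H o2 o2.
rewrite /mx3 !mxE /= in h00 h01 h02 h10 h11 h12 h20 h21 h22.
split.
- have := @L1 _ A o0 o1 h00; rewrite h01 h10 h11; apply => //.
- have := @L1 _ A o0 o2 h00; rewrite h02 h20 h22; apply => //.
- have := @L2 _ A o0 o1 o2 h00; rewrite h01 h20 h10 h02 h12 mulnC; apply => //.
- have := @L2 _ A o0 o2 o1 h00; rewrite h02 h10 h20 h01 h21 mulnC; apply => //.
Qed.
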